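(* Let $B$ be a subring of $D$ and let $f\in R=D[t;\sigma,\delta]$ be monic of degree $m\ge2$ and right $B$-weak invariant. Then $B\oplus Bt\oplus\dots\oplus Bt^{m-1}\subseteq\mathrm{Nuc}_r(S_f)$.
   Context: $D$ is an associative division ring, $\sigma$ a ring endomorphism of $D$, $\delta$ a left $\sigma$-derivation. $R=D[t;\sigma,\delta]$ is the skew polynomial ring with $ta=\sigma(a)t+\delta(a)$. For monic $f$ of degree $m$, $S_f$ is the set of polynomials of degree $<m$ with multiplication $g\circ h=$ remainder of $gh$ upon right division by $f$. $\mathrm{Nuc}_r(A)=\{x\in A:(yz)x=y(zx)\ \forall y,z\in A\}$. $f$ is right $B$-weak invariant if $fB\subseteq Df$ and $f(t)t=(bt+a)f(t)$ for some $a,b\in B$. *)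

(* Defs.v *)
From HB Require Import structures.
From mathcomp Require Import all_boot all_order all_algebra.
Set Implicit Arguments. Unset Strict Implicit. Unset Printing Implicit Defensive.
Import GRing.Theory.
Local Open Scope ring_scope.

(* Skew polynomial ring R = D[t; sigma, delta] with t a = sigma(a) t + delta(a).
   Elements are represented by their coefficient polynomials in {poly D}
   (sum_i a_i t^i  <->  sum_i a_i 'X^i); only the additive structure, size,
   coefficients and lead_coef of {poly D} are used. *)

Section Skew.
Variable D : nzRingType.
Variables (sigma delta : D -> D).

(* left multiplication by t :  t * (sum a_i t^i) = sum (sigma a_i t^{i+1} + delta a_i t^i) *)
Definition tmul (p : {poly D}) : {poly D} :=
  map_poly sigma p * 'X + map_poly delta p.

Definition skmul (p q : {poly D}) : {poly D} :=
  \sum_(i < size p) (p`_i)%:P * iter (nat_of_ord i) tmul q.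

Variable f : {poly D}.

Definition rdiv_step (g : {poly D}) : {poly D} :=
  g - skmul (lead_coef g *: 'X^(size g - size f)%N) f.

Fixpoint rmod_fuel (n : nat) (g : {poly D}) : {poly D} :=
  match n with
  | 0 => g
  | n'.+1 => if (size g < size f)%N then g else rmod_fuel n' (rdiv_step g)
  end.

Definition rmod (g : {poly D}) : {poly D} := rmod_fuel (size g) g.

Definition Sf_mul (g h : {poly D}) : {poly D} := rmod (skmul g h).

Definition in_Sf (g : {poly D}) : Prop := (size g < size f)%N.

Definition in_Nuc_r (x : {poly D}) : Prop :=
  in_Sf x /\ forall y z, in_Sf y -> in_Sf z ->
    Sf_mul (Sf_mul y z) x = Sf_mul y (Sf_mul z x).

Definition right_weak_invariant (B : {pred D}) : Prop :=
  (forall b, b \in B -> exists d : D, skmul f b%:P = skmul d%:P f) /\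
  (exists a b, a \in B /\ b \in B /\ skmul f 'X = skmul (b *: 'X + a%:P) f).

End Skew.

Definition left_sigma_derivation (D : nzRingType) (sigma : D -> D) (delta : D -> D) :=
  (forall a b, delta (a + b) = delta a + delta b) /\
  (forall a b, delta (a * b) = sigma a * delta b + delta a * b).

(* Main.v *)
Require Import Defs.
From mathcomp Require Import all_boot all_order all_algebra.
Import GRing.Theory.
Local Open Scope ring_scope.

Lemma gtsz (R : nzRingType) (p : {poly R}) i : p`_i != 0 -> (i < size p)%N.
Proof. move=> h; have [//|hle] := ltnP i (size p). by rewrite nth_default ?eqxx in h. Qed.

Section S.
Variable D : nzRingType.
Variable sigma : {rmorphism D -> D}.
Variable delta : D -> D.
Hypothesis dD : forall a b, delta (a+b) = delta a + delta b.
Hypothesis dM : forall a b, delta (a*b) = sigma a * delta b + delta a * b.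
Implicit Types (p q r s g f : {poly D}) (c : D).
Local Notation T := (tmul sigma delta).
Local Notation sk := (skmul sigma delta).

Lemma d0 : delta 0 = 0.
Proof. have h := dD 0 0; rewrite addr0 in h. by apply: (addrI (delta 0)); rewrite addr0 -h. Qed.
Lemma d1 : delta 1 = 0.
Proof. have h := dM 1 1; rewrite !mulr1 rmorph1 mul1r in h.
by apply: (addrI (delta 1)); rewrite addr0 -h. Qed.

Lemma coefT p j : (T p)`_j = (if j is j'.+1 then sigma p`_j' else 0) + delta p`_j.
Proof. rewrite /tmul coefD coefMX !coef_map_id0 ?rmorph0 ?d0 //; by case: j. Qed.

Lemma TD p q : T (p + q) = T p + T q.
Proof.
apply/polyP => j; rewrite coefD !coefT.
case: j => [|j]; first by rewrite !add0r coefD dD.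
by rewrite !coefD dD rmorphD addrACA.
Qed.
Lemma T0 : T 0 = 0.
Proof. apply/polyP => j; rewrite coefT; case: j => [|j]; by rewrite !coef0 ?rmorph0 d0 addr0. Qed.

Lemma iterD n p q : iter n T (p + q) = iter n T p + iter n T q.
Proof. elim: n => //= n IH; by rewrite IH TD. Qed.
Lemma iter0 n : iter n T 0 = 0.
Proof. elim: n => //= n ->; exact: T0. Qed.

Lemma skmulE n p r : (size p <= n)%N -> sk p r = \sum_(i < n) (p`_i)%:P * iter i T r.
Proof.
move=> h; rewrite /skmul (big_ord_widen n (fun i => (p`_i)%:P * iter i T r) h) big_mkcond /=.
apply: eq_bigr => i _; case: ifP => // /negbT; rewrite -leqNgt => hi.
by rewrite nth_default // mul0r.
Qed.

Lemma skDl p q r : sk (p + q) r = sk p r + sk q r.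
Proof.
set n := maxn (size p) (size q).
rewrite (@skmulE n (p + q)) ?size_polyD // (@skmulE n p) ?leq_maxl // (@skmulE n q) ?leq_maxr //.
rewrite -big_split; apply: eq_bigr => i _; by rewrite coefD polyCD mulrDl.
Qed.
Lemma sk0l r : sk 0 r = 0.
Proof. by rewrite /skmul size_poly0 big_ord0. Qed.
Lemma skNl p r : sk (- p) r = - sk p r.
Proof. apply: (addrI (sk p r)); by rewrite -skDl !subrr sk0l. Qed.
Lemma skDr p r s : sk p (r + s) = sk p r + sk p s.
Proof. rewrite /skmul -big_split; apply: eq_bigr => i _; by rewrite iterD mulrDr. Qed.
Lemma sk0r p : sk p 0 = 0.
Proof. rewrite /skmul big1 // => i _; by rewrite iter0 mulr0. Qed.
Lemma skNr p r : sk p (- r) = - sk p r.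
Proof. apply: (addrI (sk p r)); by rewrite -skDr !subrr sk0r. Qed.
Lemma skC c r : sk c%:P r = c%:P * r.
Proof. by rewrite (@skmulE 1) ?size_polyC ?leq_b1 // big_ord1 coefC. Qed.

Lemma skXl p r : sk (p * 'X) r = sk p (T r).
Proof.
rewrite (@skmulE (size p).+1).
  rewrite big_ord_recl coefMX /= polyC0 mul0r add0r /skmul.
  apply: eq_bigr => i _; by rewrite coefMX /= add0n -iterS iterSr.
have [->|hp] := eqVneq p 0; first by rewrite mul0r size_poly0. by rewrite size_mulX.
Qed.

Lemma skXnl k p r : sk (p * 'X^k) r = sk p (iter k T r).
Proof.
elim: k p r => [|k IH] p r; first by rewrite expr0 mulr1.
by rewrite exprSr mulrA skXl IH -iterSr.
Qed.

Lemma skCMl c q r : sk (c%:P * q) r = c%:P * sk q r.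
Proof.
elim/poly_ind: q r => [|q d IH] r; first by rewrite mulr0 sk0l mulr0.
rewrite mulrDr mulrA !skDl !skXl IH -polyCM !skC polyCM mulrDr mulrA //.
Qed.

Lemma TCM c g : T (c%:P * g) = (sigma c)%:P * T g + (delta c)%:P * g.
Proof.
apply/polyP => j; rewrite !coefT coefD !coefCM !coefT.
case: j => [|j]; first by rewrite !add0r dM.
rewrite (coefCM c g j). by rewrite dM rmorphM mulrDr addrA.
Qed.

Lemma TXr q : T (q * 'X) = T q * 'X.
Proof.
apply/polyP => j; rewrite coefMX !coefT coefMX.
case: j => [|j] /=; first by rewrite d0 addr0.
rewrite coefMX; case: j => [|j] /=; by rewrite ?rmorph0 ?add0r.
Qed.

Lemma TC c : T c%:P = (sigma c)%:P * 'X + (delta c)%:P.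
Proof.
apply/polyP => j; rewrite coefT coefD coefMX !coefC.
case: j => [|j] /=; first by rewrite add0r.
case: j => [|j] /=; by rewrite coefC /= ?d0 ?addr0 ?rmorph0.
Qed.

Lemma skT q r : sk (T q) r = T (sk q r).
Proof.
elim/poly_ind: q r => [|q c IH] r; first by rewrite T0 sk0l T0.
by rewrite TD TXr TC !skDl (skXl (T q) r) (skXl _ r) (skXl q r) IH !skC TD TCM addrA.
Qed.

Lemma skA p q r : sk (sk p q) r = sk p (sk q r).
Proof.
elim/poly_ind: p q r => [|p c IH] q r; first by rewrite !sk0l.
by rewrite (skDl (p*'X) c%:P q) (skXl p q) (skC c q) skDl IH skCMl (skDl (p*'X)) (skXl p) skC skT.
Qed.

Lemma TX j : T ('X^j) = 'X^(j.+1).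
Proof.
apply/polyP => i; rewrite coefT !coefXn.
case: i => [|i] /=.
  by case: (0 == j)%N; rewrite /= ?mulr1n ?mulr0n ?d1 ?d0 add0r.
rewrite eqSS coefXn; case: (i == j)%N; case: (i.+1 == j)%N;
  by rewrite /= ?mulr1n ?mulr0n ?d1 ?d0 ?rmorph1 ?rmorph0 ?addr0.
Qed.

Lemma skXr p j : sk p 'X^j = p * 'X^j.
Proof.
elim/poly_ind: p j => [|p c IH] j; first by rewrite sk0l mul0r.
by rewrite skDl skXl skC TX IH mulrDl exprS mulrA.
Qed.

Lemma T_mon p n : size p = n.+1 -> p`_n = 1 -> size (T p) = n.+2 /\ (T p)`_n.+1 = 1.
Proof.
move=> hs hc.
have hc' : (T p)`_n.+1 = 1 by rewrite coefT hc rmorph1 nth_default ?hs // d0 addr0.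
split=> //; apply/eqP; rewrite eqn_leq; apply/andP; split.
  apply/leq_sizeP => j hj; rewrite coefT; case: j hj => [|j] // hj.
  by rewrite !nth_default ?hs // ?rmorph0 ?d0 ?addr0 // ltnW.
by apply: gtsz; rewrite hc' oner_neq0.
Qed.

Lemma iterT_mon k p n : size p = n.+1 -> p`_n = 1 ->
  size (iter k T p) = (n + k).+1 /\ (iter k T p)`_(n + k) = 1.
Proof.
move=> hs hc; elim: k => [|k [IH1 IH2]]; first by rewrite addn0.
rewrite /= addnS; exact: T_mon.
Qed.

Lemma sizeCM c p n : size p = n.+1 -> p`_n = 1 ->
  size (c%:P * p) = if c == 0 then 0%N else n.+1.
Proof.
move=> hs hc; case: eqP => [->|/eqP hc0]; first by rewrite polyC0 mul0r size_poly0.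
apply/eqP; rewrite eqn_leq; apply/andP; split.
  apply/leq_sizeP => j hj; by rewrite coefCM nth_default ?hs // mulr0.
by apply: gtsz; rewrite coefCM hc mulr1.
Qed.

Lemma size_sk q f n : size f = n.+1 -> f`_n = 1 ->
  size (sk q f) = if q == 0 then 0%N else (size q + n)%N.
Proof.
elim/poly_ind: q f n => [|q c IH] f n hs hc; first by rewrite sk0l size_poly0 eqxx.
have [hs' hc'] := T_mon _ _ hs hc.
rewrite skDl skXl skC.
have -> : (q * 'X + c%:P == 0) = (q == 0) && (c == 0).
  by rewrite -[LHS]size_poly_eq0 size_MXaddC; case: ifP.
have [->|hq] := eqVneq q 0.
  by rewrite sk0l add0r (sizeCM c _ _ hs hc) mul0r add0r size_polyC /=; case: eqP.
rewrite size_polyDl (IH _ _ hs' hc') (negbTE hq) //= ?size_MXaddC ?(negbTE hq) //=.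
  by rewrite addnS.
rewrite (sizeCM c _ _ hs hc); case: (c == 0) => /=; first by rewrite addnS.
by rewrite -{1}(add0n n.+1) ltn_add2r size_poly_gt0.
Qed.

Section Rmod.
Variable f : {poly D}.
Variable n : nat.
Hypothesis hs : size f = n.+1.
Hypothesis hc : f`_n = 1.

Lemma step_lt g : (size f <= size g)%N -> (size (rdiv_step sigma delta f g) < size g)%N.
Proof.
move=> hg; rewrite /rdiv_step.
set s := size g; set k := (s - size f)%N; set c := lead_coef g.
rewrite -mul_polyC skCMl -(mul1r 'X^k) skXnl -polyC1 skC mul1r.
have [h1 h2] := iterT_mon k _ _ hs hc.
have hnk : (n + k).+1 = s by rewrite /k hs -addSn subnKC // -hs.
have s0 : (0 < s)%N by rewrite -hnk.
set d := g - _.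
have hd : (size d <= s)%N.
  apply/leq_sizeP => j hj; rewrite /d coefB coefCM !nth_default ?h1 ?hnk // mulr0 subr0 //.
have : d`_(s.-1) = 0.
  by rewrite /d coefB coefCM -hnk /= h2 mulr1 /c lead_coefE -/s -hnk subrr.
move=> hd0; suff h : (size d <= s.-1)%N by rewrite -(prednK s0) ltnS.
apply/leq_sizeP => j hj; move: hj; rewrite leq_eqVlt => /orP [/eqP <-|hj] //.
by rewrite nth_default // (leq_trans hd) // -(prednK s0).
Qed.

Lemma fuel_spec m g : (size g < m + size f)%N ->
  exists q, rmod_fuel sigma delta f m g = g - sk q f /\ (size (rmod_fuel sigma delta f m g) < size f)%N.
Proof.
elim: m g => [|m IH] g hg /=; first by exists 0; rewrite sk0l subr0.
case: ifP => hgf; first by exists 0; rewrite sk0l subr0.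
have hle : (size f <= size g)%N by rewrite leqNgt hgf.
have hlt := step_lt _ hle.
have hg' : (size g <= m + size f)%N by rewrite -ltnS -addSn.
have [q [e hq]] := IH (rdiv_step sigma delta f g) (leq_trans hlt hg').
exists ((lead_coef g *: 'X^(size g - size f)) + q); split => //.
by rewrite e /rdiv_step skDl opprD addrA.
Qed.

Lemma rmod_spec g : exists q, rmod sigma delta f g = g - sk q f /\ (size (rmod sigma delta f g) < size f)%N.
Proof. apply: fuel_spec; by rewrite -addn1 leq_add2l hs. Qed.

Lemma rmod_uniq g r q : (size r < size f)%N -> r = g - sk q f -> rmod sigma delta f g = r.
Proof.
move=> hr er; have [q' [e hq']] := rmod_spec g.
have hdiff : rmod sigma delta f g - r = sk (q - q') f.
  by rewrite e er skDl skNl opprB addrC addrA subrK.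
have : (size (sk (q - q') f) < size f)%N.
  rewrite -hdiff; apply: leq_ltn_trans (size_polyD _ _) _; by rewrite size_polyN gtn_max hq' hr.
rewrite (size_sk _ _ _ hs hc); case: eqP => [h0 _|hne]; last by rewrite hs ltnS -{2}(add0n n) leq_add2r leqn0 size_poly_eq0 => /eqP /hne.
by apply/eqP; rewrite -subr_eq0 hdiff h0 sk0l.
Qed.

Lemma rmod_sub g k : rmod sigma delta f (g - sk k f) = rmod sigma delta f g.
Proof.
have [q [e hq]] := rmod_spec g.
rewrite e; apply: (@rmod_uniq _ _ (q - k)) => //.
  by rewrite -e.
by rewrite (skDl q (-k) f) (skNl k f) opprD opprK addrA addrAC subrK.
Qed.
End Rmod.
End S.

Theorem mainTheorem4
  (D : unitRingType)
  (D_div : forall x : D, x != 0 -> x \is a GRing.unit)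
  (sigma : {rmorphism D -> D}) (delta : D -> D)
  (hdelta : left_sigma_derivation sigma delta)
  (B : {pred D}) (hB : subring_closed B)
  (f : {poly D}) (m : nat)
  (hf_monic : f \is monic) (hf_deg : size f = m.+1) (hm : (2 <= m)%N)
  (hf_inv : right_weak_invariant sigma delta f B) :
  forall x : {poly D}, (size x <= m)%N -> (forall i, x`_i \in B) ->
    in_Nuc_r sigma delta f x.
Proof.
move=> x hxs hxB.
case: hdelta => dD dM.
have hfm : f`_m = 1 by move: hf_monic; rewrite monicE lead_coefE hf_deg => /eqP.
have A := @skA D sigma delta dD dM.
have Dl := @skDl D sigma delta.
have Dr := @skDr D sigma delta dD.
have Nl := @skNl D sigma delta.
have Nr := @skNr D sigma delta dD.
have Z0l := @sk0l D sigma delta.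
have Z0r := @sk0r D sigma delta dD.
have Xr := @skXr D sigma delta dD dM.
have Rs := @rmod_spec D sigma delta dD f m hf_deg hfm.
have Rsub := @rmod_sub D sigma delta dD f m hf_deg hfm.
have key : forall x : {poly D}, (forall i, x`_i \in B) ->
    exists h, skmul sigma delta f x = skmul sigma delta h f.
  elim/poly_ind => [|x' c IH] hx; first by exists 0; rewrite Z0r Z0l.
  have hx' : forall i, x'`_i \in B.
    by move=> i; move: (hx i.+1); rewrite coefD coefMX coefC /= addr0.
  have hc : c \in B by move: (hx 0%N); rewrite coefD coefMX coefC /= add0r.
  have [h' eh] := IH hx'.
  case: hf_inv => [h1 [a [b [_ [_ eab]]]]].
  have [d ed] := h1 c hc.
  have e1 := Xr x' 1%N; rewrite expr1 in e1.
  exists (skmul sigma delta h' (b *: 'X + a%:P) + d%:P).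
  by rewrite Dr Dl ed -e1 -(A f x' 'X) eh (A h' f 'X) eab -(A h' _ f).
split; first by rewrite /in_Sf hf_deg ltnS.
move=> y z _ _; rewrite /Sf_mul.
have [h eh] := key x hxB.
have [q1 [e1 _]] := Rs (skmul sigma delta y z).
have [q2 [e2 _]] := Rs (skmul sigma delta z x).
rewrite e1 e2 Dl Nl (A q1 f x) eh -(A q1 h f) Rsub Dr Nr -(A y q2 f) Rsub.
by rewrite A.
Qed.
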